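(* Let $f,g:\mathbb R\to\mathbb R_{+\infty}$ be $\mathcal H$-convex with $\operatorname{dom} f\cap\operatorname{dom} g\ne\emptyset$. Then $\operatorname{cl}(\operatorname{supp} f+\operatorname{supp} g)$ is $\mathcal H$-convex, and $$\operatorname{supp}(f+g)=\operatorname{cl}(\operatorname{supp} f+\operatorname{supp} g).$$ Equivalently, $\operatorname{cl}(\operatorname{epi} f^*+\operatorname{epi} g^* )=\operatorname{epi}(f+g)^*$ in $\mathcal L\times\mathbb R$.
   Context: $X=\mathbb R$; $\mathbb R_{+\infty}=\mathbb R\cup\{+\infty\}$. For $a,b\in\mathbb R$, $\phi_a(x)=ax^2$, $\psi_{a,b}(x)=ax^2+b$; $\mathcal L=\{\phi_a:a\in\mathbb R\}$, $\mathcal H=\{\psi_{a,b}:a,b\in\mathbb R\}$, both with the pointwise convergence topology (under which $\phi_a\mapsto a$ and $\psi_{a,b}\mapsto(a,b)$ are homeomorphisms onto $\mathbb R$ and $\mathbb R^2$); $\mathcal L\times\mathbb R$ has the product topology; $\operatorname{cl}$ is closure. $\operatorname{dom} f=\{x:f(x)<+\infty\}$; $\operatorname{supp} f=\{h\in\mathcal H:h\le f\}$; $f$ is $\mathcal H$-convex if $f=\sup_{h\in H}h$ for some $H\subset\mathcal H$; a set $C\subset\mathcal H$ is $\mathcal H$-convex if for every $h_0\in\mathcal H\setminus C$ there is $x$ with $h_0(x)>\sup_{h\in C}h(x)$. $f^*(\phi_a)=\sup_x(ax^2-f(x))$ and $\operatorname{epi} f^*=\{(l,r)\in\mathcal L\times\mathbb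 R:f^*(l)\le r\}$. Sums of sets are Minkowski sums. *)

(* Defs.v *)
From Stdlib Require Import Reals.
Open Scope R_scope.

Inductive ER : Type := Fin (r : R) | PInf.

Definition ER_le (r : R) (e : ER) : Prop :=
  match e with Fin v => r <= v | PInf => True end.

Definition ER_add (e1 e2 : ER) : ER :=
  match e1, e2 with Fin a, Fin b => Fin (a + b) | _, _ => PInf end.

(* H = { psi_{a,b} : x |-> a x^2 + b }, identified with R x R via (a,b);
   this identification is a homeomorphism for the pointwise topology. *)
Definition psi (h : R * R) (x : R) : R := fst h * x ^ 2 + snd h.

Definition in_dom (f : R -> ER) (x : R) : Prop := f x <> PInf.

Definition supp (f : R -> ER) : (R * R) -> Prop :=
  fun h => forall x, ER_le (psi h x) (f x).

Definition is_sup_at (H : (R * R) -> Prop) (x : R) (e : ER) : Prop :=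
  match e with
  | Fin r => is_lub (fun y => exists h, H h /\ y = psi h x) r
  | PInf => forall M, exists h, H h /\ M < psi h x
  end.

Definition H_convex_fun (f : R -> ER) : Prop :=
  exists H : (R * R) -> Prop, forall x, is_sup_at H x (f x).

(* a real number y is strictly greater than sup_{h in C} h(x) (in [-oo,+oo]) *)
Definition gt_sup (C : (R * R) -> Prop) (x y : R) : Prop :=
  exists M, M < y /\ forall h, C h -> psi h x <= M.

Definition H_convex_set (C : (R * R) -> Prop) : Prop :=
  forall h0, ~ C h0 -> exists x, gt_sup C x (psi h0 x).

Definition msum (A B : (R * R) -> Prop) : (R * R) -> Prop :=
  fun h => exists h1 h2, A h1 /\ B h2 /\ h = (fst h1 + fst h2, snd h1 + snd h2).

(* closure in R x R (product = pointwise-convergence topology) *)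
Definition closure (A : (R * R) -> Prop) : (R * R) -> Prop :=
  fun h => forall eps, 0 < eps -> exists h', A h' /\
     Rabs (fst h' - fst h) < eps /\ Rabs (snd h' - snd h) < eps.

(* epi f^* = { (phi_a, r) : f^*(phi_a) <= r }, f^*(phi_a) = sup_x (a x^2 - f x),
   terms with f x = +oo contribute -oo. *)
Definition epi_conj (f : R -> ER) : (R * R) -> Prop :=
  fun p => forall x, match f x with
                     | Fin v => fst p * x ^ 2 - v <= snd p
                     | PInf => True
                     end.

Definition set_eq (A B : (R * R) -> Prop) : Prop := forall h, A h <-> B h.

(* Main.v *)
Require Import Defs.
From Stdlib Require Import Reals Lra Psatz Classical.
Open Scope R_scope.

Lemma geo (Q : R*R -> Prop) (a b eps t0 K : R) :
  0 < eps -> 0 <= t0 ->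
  (forall q1 q2 l, Q q1 -> Q q2 -> 0 <= l <= 1 ->
     Q (l * fst q1 + (1-l) * fst q2, l * snd q1 + (1-l) * snd q2)) ->
  (forall q, Q q -> fst q * t0 + snd q <= K) ->
  (forall t eta, 0 <= t -> 0 < eta -> exists q, Q q /\ a * t + b - eta < fst q * t + snd q) ->
  exists q, Q q /\ a - eps < fst q /\ b - eps < snd q.
Proof.
  intros Heps Ht0 Hconv Hbd HP.
  apply NNPP; intro N.
  assert (HN : forall q, Q q -> fst q <= a - eps \/ snd q <= b - eps).
  { intros q Hq. destruct (Rle_dec (fst q) (a-eps)) as [?|n1]; [left; auto|].
    destruct (Rle_dec (snd q) (b-eps)) as [?|n2]; [right; auto|].
    exfalso; apply N; exists q; split; [auto|split; apply Rnot_le_lt; auto]. }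
  set (a' := a - eps) in *. set (b' := b - eps) in *.
  destruct (classic (exists q1, Q q1 /\ a' < fst q1)) as [[q1 [Hq1 Hs1]] | NQ1].
  2: {
    assert (Hall : forall q, Q q -> fst q <= a').
    { intros q Hq. apply Rnot_lt_le. intro; apply NQ1; eauto. }
    set (T := t0 + Rabs (K + 1 - a * t0 - b) / eps).
    assert (H0 : 0 <= Rabs (K + 1 - a*t0 - b) / eps).
    { unfold Rdiv; apply Rmult_le_pos; [apply Rabs_pos|apply Rlt_le, Rinv_0_lt_compat; lra]. }
    assert (HT : t0 <= T) by (unfold T; lra).
    destruct (HP T 1) as [q [Hq Hlt]]; [lra|lra|].
    pose proof (Hall q Hq). pose proof (Hbd q Hq).
    assert (H3 : fst q * T + snd q <= a' * (T - t0) + K).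
    { replace (fst q * T + snd q) with (fst q * (T - t0) + (fst q * t0 + snd q)) by ring. nra. }
    assert (H4 : eps * (T - t0) >= K + 1 - a*t0 - b).
    { unfold T. replace (eps * (t0 + Rabs (K + 1 - a * t0 - b) / eps - t0))
        with (Rabs (K + 1 - a * t0 - b)) by (field; lra). apply Rle_ge, Rle_abs. }
    unfold a' in *. nra. }
  destruct (classic (exists q2, Q q2 /\ b' < snd q2)) as [[q2 [Hq2 Hc2]] | NQ2].
  2: { destruct (HP 0 eps) as [q [Hq Hlt]]; [lra|lra|].
       assert (snd q <= b') by (apply Rnot_lt_le; intro; apply NQ2; eauto).
       replace (fst q * 0) with 0 in Hlt by ring. unfold b' in *. lra. }
  assert (Hbdry : forall q, Q q -> b' < snd q -> fst q < a').
  { intros q Hq Hc. destruct (HN q Hq) as [Hs|Hs]; [|lra].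
    destruct Hs as [Hs|Hs]; [auto|exfalso].
    destruct (HN q1 Hq1) as [?|Hc1]; [lra|].
    set (l := (snd q - b') / (2 * (snd q - snd q1))).
    assert (Hl0 : 0 < l) by (unfold l; apply Rdiv_lt_0_compat; lra).
    assert (Hl1 : l * (snd q - snd q1) = (snd q - b') / 2) by (unfold l; field; lra).
    assert (Hl2 : l <= 1).
    { unfold l. apply Rmult_le_reg_r with (2 * (snd q - snd q1)); [lra|].
      unfold Rdiv. rewrite Rmult_assoc, Rinv_l; lra. }
    pose proof (Hconv q1 q l Hq1 Hq (conj (Rlt_le _ _ Hl0) Hl2)) as Hqq.
    destruct (HN _ Hqq) as [H|H]; simpl in H.
    - rewrite Hs in H. nra.
    - replace (l * snd q1 + (1 - l) * snd q) with (snd q - l * (snd q - snd q1)) in H by ring.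
      lra. }
  assert (Hcmp : forall p1 p2, Q p1 -> Q p2 -> a' < fst p1 -> b' < snd p2 ->
     (snd p2 - b') / (a' - fst p2) <= (b' - snd p1) / (fst p1 - a')).
  { intros p1 p2 Hp1 Hp2 Hs1' Hc2'.
    pose proof (Hbdry p2 Hp2 Hc2') as Hs2.
    destruct (HN p1 Hp1) as [?|Hc1']; [lra|].
    apply Rnot_lt_le; intro Hgt.
    set (u1 := fst p1 - a') in *. set (u2 := a' - fst p2) in *.
    set (v1 := b' - snd p1) in *. set (v2 := snd p2 - b') in *.
    assert (Hu1 : 0 < u1) by (unfold u1; lra).
    assert (Hu2 : 0 < u2) by (unfold u2; lra).
    assert (Hkey : v1 * u2 < v2 * u1).
    { pose proof (Rmult_lt_compat_r (u1*u2) _ _ (Rmult_lt_0_compat _ _ Hu1 Hu2) Hgt) as HH.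
      replace (v1 / u1 * (u1 * u2)) with (v1 * u2) in HH by (field; lra).
      replace (v2 / u2 * (u1 * u2)) with (v2 * u1) in HH by (field; lra). exact HH. }
    set (l := u2 / (u1 + u2)).
    assert (Hl0 : 0 <= l) by (unfold l; apply Rlt_le, Rdiv_lt_0_compat; lra).
    assert (Hl1 : l <= 1).
    { unfold l. apply Rmult_le_reg_r with (u1 + u2); [lra|].
      unfold Rdiv. rewrite Rmult_assoc, Rinv_l; lra. }
    pose proof (Hconv p1 p2 l Hp1 Hp2 (conj Hl0 Hl1)) as Hp.
    assert (E1 : l * fst p1 + (1-l) * fst p2 = a').
    { replace (fst p1) with (a' + u1) by (unfold u1; ring).
      replace (fst p2) with (a' - u2) by (unfold u2; ring).
      unfold l; field; lra. }
    assert (E2 : l * snd p1 + (1-l) * snd p2 - b' = (u1 * v2 - u2 * v1) / (u1 + u2)).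
    { replace (snd p1) with (b' - v1) by (unfold v1; ring).
      replace (snd p2) with (b' + v2) by (unfold v2; ring).
      unfold l; field; lra. }
    assert (E3 : 0 < (u1 * v2 - u2 * v1) / (u1 + u2)) by (apply Rdiv_lt_0_compat; lra).
    pose proof (Hbdry _ Hp) as HB. simpl in HB. lra. }
  set (E := fun r => exists q, Q q /\ b' < snd q /\ r = (snd q - b') / (a' - fst q)).
  assert (Hub : bound E).
  { exists ((b' - snd q1)/(fst q1 - a')). intros r [q [Hq [Hc ->]]]. apply Hcmp; auto. }
  assert (Hne : exists r, E r) by (eexists; exists q2; eauto).
  destruct (completeness E Hub Hne) as [t [Ht Hlt]].
  assert (Hr2 : 0 < (snd q2 - b')/(a' - fst q2)).
  { pose proof (Hbdry q2 Hq2 Hc2). apply Rdiv_lt_0_compat; lra. }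
  assert (Ht0' : 0 <= t).
  { pose proof (Ht _ (ex_intro _ q2 (conj Hq2 (conj Hc2 eq_refl)))). lra. }
  assert (Hsep : forall q, Q q -> fst q * t + snd q <= a' * t + b').
  { intros q Hq. destruct (Rlt_le_dec a' (fst q)) as [Hs|Hs].
    - destruct (HN q Hq) as [?|Hc]; [lra|].
      assert (H : t <= (b' - snd q)/(fst q - a')).
      { apply Hlt; intros r [p [Hp [Hcp ->]]]; apply Hcmp; auto. }
      apply Rmult_le_compat_r with (r := fst q - a') in H; [|lra].
      replace ((b'-snd q)/(fst q - a') * (fst q - a')) with (b' - snd q) in H by (field; lra).
      nra.
    - destruct (Rlt_le_dec b' (snd q)) as [Hc|Hc].
      + pose proof (Hbdry q Hq Hc) as Hs'.
        pose proof (Ht _ (ex_intro _ q (conj Hq (conj Hc eq_refl)))) as H.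
        apply Rmult_le_compat_r with (r := a' - fst q) in H; [|lra].
        replace ((snd q - b')/(a' - fst q) * (a' - fst q)) with (snd q - b') in H by (field; lra).
        nra.
      + nra. }
  destruct (HP t eps) as [q [Hq Hq']]; [auto|auto|].
  pose proof (Hsep q Hq). unfold a', b' in *. nra.
Qed.

Lemma supp_of_rep (f : R -> ER) (S : R*R -> Prop) :
  (forall x, is_sup_at S x (f x)) -> forall h, S h -> supp f h.
Proof.
  intros Hf h Sh x. specialize (Hf x). destruct (f x) as [r|]; simpl in *; [|exact I].
  destruct Hf as [Hub _]. apply Hub. exists h; auto.
Qed.

Lemma rep_fin (f : R -> ER) (S : R*R -> Prop) :
  (forall x, is_sup_at S x (f x)) -> forall x r eta, f x = Fin r -> 0 < eta ->
  exists h, S h /\ r - eta < psi h x.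
Proof.
  intros Hf x r eta E He. specialize (Hf x); rewrite E in Hf; simpl in Hf.
  destruct Hf as [Hub Hl]. apply NNPP; intro N.
  assert (r <= r - eta); [|lra].
  apply Hl; intros y [h [Sh ->]]. apply Rnot_lt_le; intro; apply N; eauto.
Qed.

Lemma rep_inf (f : R -> ER) (S : R*R -> Prop) :
  (forall x, is_sup_at S x (f x)) -> forall x M, f x = PInf ->
  exists h, S h /\ M < psi h x.
Proof. intros Hf x M E. specialize (Hf x); rewrite E in Hf; simpl in Hf. auto. Qed.

Lemma supp_fin f h x r : supp f h -> f x = Fin r -> psi h x <= r.
Proof. intros H E; specialize (H x); rewrite E in H; exact H. Qed.

Lemma psi_add h1 h2 x : psi (fst h1 + fst h2, snd h1 + snd h2) x = psi h1 x + psi h2 x.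
Proof. unfold psi; simpl; ring. Qed.

Lemma approxQ f g Sf Sg a b :
  (forall x, is_sup_at Sf x (f x)) -> (forall x, is_sup_at Sg x (g x)) ->
  supp (fun x => ER_add (f x) (g x)) (a,b) ->
  forall x eta, 0 < eta -> exists q, msum (supp f) (supp g) q /\ psi (a,b) x - eta < psi q x.
Proof.
  intros Hf Hg H x eta He.
  assert (mk : forall h1 h2, Sf h1 -> Sg h2 -> msum (supp f) (supp g) (fst h1 + fst h2, snd h1 + snd h2)).
  { intros h1 h2 H1 H2. exists h1, h2. split; [eapply supp_of_rep; eauto|].
    split; [eapply supp_of_rep; eauto|reflexivity]. }
  pose proof (H x) as Hx. cbv beta in Hx.
  destruct (f x) as [r|] eqn:Ef; destruct (g x) as [v|] eqn:Eg; cbn [ER_le ER_add] in Hx.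
  - destruct (rep_fin f Sf Hf x r (eta/2) Ef) as [h1 [S1 L1]]; [lra|].
    destruct (rep_fin g Sg Hg x v (eta/2) Eg) as [h2 [S2 L2]]; [lra|].
    exists (fst h1 + fst h2, snd h1 + snd h2). split; [auto|]. rewrite psi_add. lra.
  - destruct (rep_fin f Sf Hf x r 1 Ef) as [h1 [S1 L1]]; [lra|].
    destruct (rep_inf g Sg Hg x (psi (a,b) x - r + 1) Eg) as [h2 [S2 L2]].
    exists (fst h1 + fst h2, snd h1 + snd h2). split; [auto|]. rewrite psi_add. lra.
  - destruct (rep_fin g Sg Hg x v 1 Eg) as [h2 [S2 L2]]; [lra|].
    destruct (rep_inf f Sf Hf x (psi (a,b) x - v + 1) Ef) as [h1 [S1 L1]].
    exists (fst h1 + fst h2, snd h1 + snd h2). split; [auto|]. rewrite psi_add. lra.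
  - destruct (rep_inf g Sg Hg x 0 Eg) as [h2 [S2 L2]].
    destruct (rep_inf f Sf Hf x (psi (a,b) x) Ef) as [h1 [S1 L1]].
    exists (fst h1 + fst h2, snd h1 + snd h2). split; [auto|]. rewrite psi_add. lra.
Qed.

Lemma supp_convex f h1 h2 l : supp f h1 -> supp f h2 -> 0 <= l <= 1 ->
  supp f (l * fst h1 + (1-l) * fst h2, l * snd h1 + (1-l) * snd h2).
Proof.
  intros H1 H2 Hl x. specialize (H1 x); specialize (H2 x).
  destruct (f x) as [r|]; simpl in *; [|exact I].
  unfold psi in *; simpl.
  replace ((l * fst h1 + (1 - l) * fst h2) * x ^ 2 + (l * snd h1 + (1 - l) * snd h2))
    with (l * (fst h1 * x ^ 2 + snd h1) + (1-l) * (fst h2 * x ^ 2 + snd h2)) by ring.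
  nra.
Qed.

Lemma msum_convex f g : forall q1 q2 l, msum (supp f) (supp g) q1 -> msum (supp f) (supp g) q2 ->
  0 <= l <= 1 ->
  msum (supp f) (supp g) (l * fst q1 + (1-l) * fst q2, l * snd q1 + (1-l) * snd q2).
Proof.
  intros q1 q2 l [a1 [b1 [A1 [B1 E1]]]] [a2 [b2 [A2 [B2 E2]]]] Hl.
  exists (l * fst a1 + (1-l) * fst a2, l * snd a1 + (1-l) * snd a2),
         (l * fst b1 + (1-l) * fst b2, l * snd b1 + (1-l) * snd b2).
  split; [apply supp_convex; auto|]. split; [apply supp_convex; auto|].
  rewrite E1, E2; simpl; f_equal; ring.
Qed.

Lemma supp_down f h al be : supp f h -> 0 <= al -> 0 <= be -> supp f (fst h - al, snd h - be).
Proof.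
  intros H Ha Hb x. specialize (H x). destruct (f x); simpl in *; [|exact I].
  unfold psi in *; simpl. pose proof (pow2_ge_0 x). nra.
Qed.

Lemma lower s a eps : a - eps < s -> 0 < eps -> exists al, 0 <= al /\ Rabs (s - al - a) < eps.
Proof.
  intros H He. destruct (Rle_dec s a).
  - exists 0. split; [lra|]. apply Rabs_def1; lra.
  - exists (s - a). split; [lra|]. apply Rabs_def1; lra.
Qed.

Lemma clQ_supp f g h : closure (msum (supp f) (supp g)) h -> supp (fun x => ER_add (f x) (g x)) h.
Proof.
  intros Hc x. destruct (f x) as [r|] eqn:Ef; destruct (g x) as [v|] eqn:Eg; simpl; try exact I.
  apply Rnot_lt_le; intro Hlt.
  set (d := psi h x - (r + v)).
  assert (Hd : 0 < d) by (unfold d; lra).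
  assert (Hx2 : 0 <= x ^ 2) by apply pow2_ge_0.
  set (eps := d / (x ^ 2 + 2)).
  assert (He : 0 < eps) by (unfold eps; apply Rdiv_lt_0_compat; lra).
  destruct (Hc eps He) as [h' [[h1 [h2 [H1 [H2 Eq]]]] [A B]]].
  pose proof (supp_fin f h1 x r H1 Ef). pose proof (supp_fin g h2 x v H2 Eg).
  assert (Hp : psi h' x <= r + v) by (rewrite Eq, psi_add; lra).
  apply Rabs_def2 in A. apply Rabs_def2 in B.
  assert (Heq : eps * (x ^ 2 + 2) = d) by (unfold eps; field; lra).
  unfold d, psi in *. nra.
Qed.

Lemma supp_clQ f g Sf Sg x0 h :
  (forall x, is_sup_at Sf x (f x)) -> (forall x, is_sup_at Sg x (g x)) ->
  in_dom f x0 -> in_dom g x0 ->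
  supp (fun x => ER_add (f x) (g x)) h -> closure (msum (supp f) (supp g)) h.
Proof.
  intros Hf Hg D1 D2 H eps Heps. destruct h as [a b].
  unfold in_dom in *.
  destruct (f x0) as [u0|] eqn:E0; [|contradiction].
  destruct (g x0) as [v0|] eqn:F0; [|contradiction].
  destruct (geo (msum (supp f) (supp g)) a b eps (x0^2) (u0 + v0)) as [q [Hq [Hs Hc]]].
  - exact Heps.
  - apply pow2_ge_0.
  - apply msum_convex.
  - intros q [h1 [h2 [H1 [H2 Eq]]]].
    pose proof (supp_fin f h1 x0 u0 H1 E0). pose proof (supp_fin g h2 x0 v0 H2 F0).
    change (fst q * x0 ^ 2 + snd q) with (psi q x0). rewrite Eq, psi_add. lra.
  - intros t eta Ht He.
    destruct (approxQ f g Sf Sg a b Hf Hg H (sqrt t) eta He) as [q [Hq L]].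
    exists q. split; auto. unfold psi in L; cbn [fst snd] in L. replace (sqrt t ^ 2) with t in L by (rewrite <- Rsqr_pow2; symmetry; apply Rsqr_sqrt; exact Ht). lra.
  - destruct Hq as [h1 [h2 [H1 [H2 Eq]]]].
    destruct (lower (fst q) a eps Hs Heps) as [al [Hal Ra]].
    destruct (lower (snd q) b eps Hc Heps) as [be [Hbe Rb]].
    exists (fst q - al, snd q - be). split.
    + exists (fst h1 - al, snd h1 - be), h2. split; [apply supp_down; auto|].
      split; [auto|]. rewrite Eq; simpl; f_equal; ring.
    + simpl. split; auto.
Qed.

Lemma epi_supp F p : epi_conj F p <-> supp F (fst p, - snd p).
Proof.
  split; intros H x; specialize (H x); destruct (F x); simpl in *; auto;
  unfold psi in *; simpl in *; lra.
Qed.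

Lemma cl_epi f g p : closure (msum (epi_conj f) (epi_conj g)) p <->
  closure (msum (supp f) (supp g)) (fst p, - snd p).
Proof.
  split; intros Hc eps He; destruct (Hc eps He) as [h' [[h1 [h2 [E1 [E2 Eq]]]] [A B]]];
  exists (fst h', - snd h'); simpl in *.
  - split.
    + exists (fst h1, - snd h1), (fst h2, - snd h2).
      split; [apply epi_supp; auto|]. split; [apply epi_supp; auto|].
      rewrite Eq; simpl; f_equal; ring.
    + split; auto. replace (- snd h' - - snd p) with (-(snd h' - snd p)) by ring.
      rewrite Rabs_Ropp; auto.
  - split.
    + exists (fst h1, - snd h1), (fst h2, - snd h2).
      split; [apply epi_supp; simpl; rewrite Ropp_involutive; destruct h1; auto|].
      split; [apply epi_supp; simpl; rewrite Ropp_involutive; destruct h2; auto|].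
      rewrite Eq; simpl; f_equal; ring.
    + split; auto. replace (- snd h' - snd p) with (-(snd h' - - snd p)) by ring.
      rewrite Rabs_Ropp; auto.
Qed.

Theorem mainTheorem14 (f g : R -> ER) :
  H_convex_fun f -> H_convex_fun g ->
  (exists x, in_dom f x /\ in_dom g x) ->
  H_convex_set (closure (msum (supp f) (supp g))) /\
  set_eq (supp (fun x => ER_add (f x) (g x))) (closure (msum (supp f) (supp g))) /\
  set_eq (closure (msum (epi_conj f) (epi_conj g)))
         (epi_conj (fun x => ER_add (f x) (g x))).
Proof.
  intros [Sf Hf] [Sg Hg] [x0 [D1 D2]].
  assert (P2 : set_eq (supp (fun x => ER_add (f x) (g x))) (closure (msum (supp f) (supp g)))).
  { intros h; split; [eapply supp_clQ; eauto|apply clQ_supp]. }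
  split; [|split; [exact P2|]].
  - intros h0 Hn.
    assert (Hn' : ~ supp (fun x => ER_add (f x) (g x)) h0) by (intro; apply Hn, P2; auto).
    unfold supp in Hn'. apply not_all_ex_not in Hn'. destruct Hn' as [x Hx].
    destruct (ER_add (f x) (g x)) as [v|] eqn:E; simpl in Hx; [|tauto].
    exists x, v. split; [apply Rnot_le_lt; auto|].
    intros h Hh. apply clQ_supp in Hh. specialize (Hh x). cbv beta in Hh. rewrite E in Hh. exact Hh.
  - intros p. rewrite cl_epi, epi_supp. split; intro H; apply P2; auto.
Qed.
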